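(* Let $F$ be the cdf of a continuous nonnegative random variable with unbounded support $[0,\infty)$, density $f$ and hazard rate $h=f/(1-F)$. Let $\sigma_1,\sigma_2\geq0$, $\lambda_1,\lambda_2>0$, $r_1,r_2\geq0$, and let $n_1,n_2,n_1^*,n_2^*$ be positive integers with $n_1r_1+n_2r_2=1$ and $n_1^*r_1+n_2^*r_2=1$; put $n=n_1+n_2$, $n^*=n_1^*+n_2^*$. Let $U_n$ and $U_{n^*}$ be random variables with cdfs $$F_{U_n}(x)=n_1r_1F\!\left(\tfrac{x-\sigma_1}{\lambda_1}\right)I(x>\sigma_1)+n_2r_2F\!\left(\tfrac{x-\sigma_2}{\lambda_2}\right)I(x>\sigma_2),$$ $$F_{U_{n^*}}(x)=n_1^*r_1F\!\left(\tfrac{x-\sigma_1}{\lambda_1}\right)I(x>\sigma_1)+n_2^*r_2F\!\left(\tfrac{x-\sigma_2}{\lambda_2}\right)I(x>\sigma_2).$$ Suppose either that $F$ is IFR and $(\lambda_1,\lambda_2),(\sigma_1,\sigma_2)\in\mathcal{D}_2^+$, or that $F$ is DPFR and $(\lambda_1,\lambda_2),(\sigma_1,\sigma_2)\in\mathcal{E}_2^+$. If $n_1n_2^*\geq n_1^*n_2$, then $U_n\geq_{hr}U_{n^*}$.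
   Context: $I(x>\sigma)$ is $1$ if $x>\sigma$ and $0$ otherwise. $\mathcal{D}_2^+=\{(u_1,u_2):u_1\geq u_2>0\}$, $\mathcal{E}_2^+=\{(u_1,u_2):0<u_1\leq u_2\}$. $F$ is IFR if $h(x)$ is increasing in $x>0$; $F$ is DPFR (decreasing proportional failure rate) if $xh(x)$ is decreasing in $x>0$. $X\geq_{hr}Y$ means the hazard rate of $X$ is at most the hazard rate of $Y$ at every $x\geq0$ (equivalently $\bar F_X(x)/\bar F_Y(x)$ is increasing). *)

(* Defs.v *)
From Stdlib Require Import Reals Lra.
Open Scope R_scope.

Definition ind_gt (s x : R) : R := if Rlt_dec s x then 1 else 0.

Definition lifetime_cdf (F f : R -> R) : Prop :=
  (forall x, continuity_pt F x) /\
  (forall x, x <= 0 -> F x = 0) /\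
  (forall x y, 0 <= x -> x < y -> F x < F y) /\   (* support is [0,oo) *)
  (forall x, F x < 1) /\                           (* unbounded support *)
  (forall eps, 0 < eps -> exists M, forall x, M < x -> 1 - F x < eps) /\
  (forall x, 0 < x -> 0 <= f x /\ derivable_pt_lim F x (f x)).

Definition hazard (F f : R -> R) (x : R) : R := f x / (1 - F x).

Definition IFR (F f : R -> R) : Prop :=
  forall x y, 0 < x -> x <= y -> hazard F f x <= hazard F f y.

Definition DPFR (F f : R -> R) : Prop :=
  forall x y, 0 < x -> x <= y -> y * hazard F f y <= x * hazard F f x.

Definition mix_cdf (F : R -> R) (a1 a2 s1 s2 l1 l2 : R) (x : R) : R :=
  a1 * F ((x - s1) / l1) * ind_gt s1 x + a2 * F ((x - s2) / l2) * ind_gt s2 x.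

Definition hr_ge (FX FY : R -> R) : Prop :=
  forall x y, x <= y -> (1 - FX x) / (1 - FY x) <= (1 - FX y) / (1 - FY y).

(* Main.v *)
Require Import Defs.
From Stdlib Require Import Reals Lra Psatz.
From Coquelicot Require Import Coquelicot.
Open Scope R_scope.

Lemma mono_deriv (g dg : R -> R) a b : a <= b ->
  (forall x, a < x < b -> derivable_pt_lim g x (dg x)) ->
  (forall x, a <= x <= b -> continuity_pt g x) ->
  (forall x, a < x < b -> 0 <= dg x) -> g a <= g b.
Proof.
  intros hab hd hc hp.
  destruct (Req_dec a b) as [->|hne]; [lra|].
  assert (hlt : a < b) by lra.
  pose (pr1 := fun c (P : a < c < b) => (exist _ (dg c) (hd c P) : derivable_pt g c)).
  pose (pr2 := fun c (P : a < c < b) => derivable_pt_id c).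
  destruct (MVT g id a b pr1 pr2 hlt hc (fun c _ => derivable_continuous_pt _ _ (derivable_pt_id c)))
    as [c [P HP]].
  rewrite (derive_pt_eq_0 g c (dg c) (pr1 c P) (hd c P)) in HP.
  rewrite (derive_pt_eq_0 id c 1 (pr2 c P) (derivable_pt_lim_id c)) in HP.
  unfold id in HP. specialize (hp c P). nra.
Qed.

Section S.
Variables (F f : R -> R).
Hypothesis HF : lifetime_cdf F f.

Lemma F_lt1 x : 0 < 1 - F x.
Proof. destruct HF as (_&_&_&h&_). specialize (h x). lra. Qed.

Lemma F_zero x : x <= 0 -> F x = 0.
Proof. destruct HF as (_&h&_). apply h. Qed.

Lemma F_mono x y : x <= y -> F x <= F y.
Proof.
  destruct HF as (_&h0&hs&_). intros hxy.
  destruct (Rle_lt_dec y 0).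
  - rewrite !h0; lra.
  - destruct (Rle_lt_dec x 0).
    + rewrite (h0 x) by lra. rewrite <- (h0 0) by lra. left; apply hs; lra.
    + destruct (Req_dec x y) as [->|]; [lra|]. left; apply hs; lra.
Qed.

Lemma dS s l z : 0 < l -> s < z ->
  derivable_pt_lim (fun z => 1 - F ((z - s) / l)) z (- (f ((z - s) / l) / l)).
Proof.
  intros hl hz. apply is_derive_Reals.
  assert (hu : 0 < (z - s) / l) by (apply Rdiv_lt_0_compat; lra).
  destruct HF as (_&_&_&_&_&hd). destruct (hd _ hu) as [_ hd'].
  apply is_derive_Reals in hd'.
  assert (ha : is_derive (fun z => (z - s) / l) z (/ l)).
  { auto_derive; [exact I| field; lra]. }
  pose proof (is_derive_comp F (fun z => (z - s)/l) z _ _ hd' ha) as hc.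
  pose proof (is_derive_minus (fun _ => 1) _ z 0 _ (is_derive_const 1 z) hc) as hm.
  simpl in hm. unfold scal in hm; simpl in hm; unfold mult in hm; simpl in hm.
  unfold minus, plus, opp in hm; simpl in hm.
  replace (- (f ((z - s) / l) / l)) with (0 + - (/ l * f ((z - s) / l))) by (field; lra).
  exact hm.
Qed.

Lemma cS s l z : 0 < l -> continuity_pt (fun z => 1 - F ((z - s) / l)) z.
Proof.
  intros hl. destruct HF as (hc&_).
  apply continuity_pt_minus; [apply continuity_pt_const; intros ??; reflexivity|].
  change (fun z => F ((z - s) / l)) with (comp F (fun z => (z - s)/l)).
  apply continuity_pt_comp; [|apply hc].
  apply derivable_continuous_pt. reg.
Qed.

Lemma F_nonneg x : 0 <= F x.
Proof. rewrite <- (F_zero 0) by lra. destruct (Rle_lt_dec x 0).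
  rewrite F_zero by lra. rewrite F_zero; lra. apply F_mono; lra. Qed.

Lemma DPFR_false : DPFR F f -> False.
Proof.
  intros hD.
  pose proof HF as (_&_&hs&_&_&hd).
  destruct (MVT_cor2 F f (/2) 1 ltac:(lra)) as [c [hc hcr]].
  { intros c hc. apply hd. lra. }
  assert (hF := hs (/2) 1 ltac:(lra) ltac:(lra)).
  assert (hfc : 0 < f c) by nra.
  set (K := c * hazard F f c).
  assert (hK : 0 < K).
  { unfold K, hazard. pose proof (F_lt1 c). apply Rmult_lt_0_compat; [lra|].
    apply Rdiv_lt_0_compat; lra. }
  set (psi := fun z => ln (1 - F z) + K * ln z).
  assert (dpsi : forall z, 0 < z -> derivable_pt_lim (fun z => - psi z) z
                 (- (- f z / (1 - F z) + K * / z))).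
  { intros z hz. apply is_derive_Reals. unfold psi.
    apply (is_derive_opp (fun z => ln (1 - F z) + K * ln z)). apply (is_derive_plus (fun z => ln (1 - F z)) (fun z => K * ln z)).
    - pose proof (proj2 (hd z hz)) as h1. apply is_derive_Reals in h1.
      pose proof (is_derive_minus (fun _ => 1) F z 0 _ (is_derive_const 1 z) h1) as h2.
      pose proof (is_derive_comp ln (fun z => minus 1 (F z)) z _ _
        (is_derive_ln _ (F_lt1 z)) h2) as h3.
      unfold scal, minus, plus, opp, mult in h3; simpl in h3; unfold mult in h3; simpl in h3.
      replace (- f z / (1 - F z)) with ((0 + - f z) * / (1 + - F z)) by (unfold Rminus, Rdiv; ring).
      exact h3.
    - apply (is_derive_scal (fun z => ln z)). apply is_derive_ln; lra. }
  assert (hle : forall e, 0 < e <= c -> psi c <= psi e).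
  { intros e he. apply Ropp_le_cancel.
    apply (mono_deriv (fun z => - psi z) (fun z => - (- f z / (1 - F z) + K * / z))).
    - lra.
    - intros x hx. apply dpsi. lra.
    - intros x hx. apply derivable_continuous_pt.
      exists (- (- f x / (1 - F x) + K * / x)). apply dpsi; lra.
    - intros x hx. pose proof (hD x c ltac:(lra) ltac:(lra)) as h.
      fold K in h. unfold hazard in h. pose proof (F_lt1 x).
      assert (x * (f x / (1 - F x)) >= K) by lra.
      assert (e1 : - (- f x / (1 - F x) + K * / x) = (x * (f x / (1 - F x)) - K) / x)
        by (field; lra).
      rewrite e1. apply Rdiv_le_0_compat; lra. }
  set (e := exp ((psi c - 1) / K)).
  assert (he0 : 0 < e) by apply exp_pos.
  assert (hpc : psi c <= K * ln c).
  { unfold psi. assert (ln (1 - F c) <= 0).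
    { rewrite <- ln_1. apply ln_le. apply F_lt1. pose proof (F_nonneg c); lra. }
    lra. }
  assert (hlne : ln e = (psi c - 1) / K) by (unfold e; apply ln_exp).
  assert (hec : e < c).
  { apply ln_lt_inv; try lra. rewrite hlne.
    apply (Rmult_lt_reg_r K); [lra|]. field_simplify; lra. }
  specialize (hle e ltac:(lra)).
  assert (ln (1 - F e) <= 0).
  { rewrite <- ln_1. apply ln_le. apply F_lt1. pose proof (F_nonneg e); lra. }
  unfold psi in hle at 2. rewrite hlne in hle.
  assert (K * ((psi c - 1) / K) = psi c - 1) by (field; lra).
  lra.
Qed.

Lemma t_mono (hI : IFR F f) s1 s2 l1 l2 :
  0 < l2 <= l1 -> 0 < s2 <= s1 ->
  forall x y, x <= y ->
  (1 - F ((x - s1) / l1)) / (1 - F ((x - s2) / l2)) <=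
  (1 - F ((y - s1) / l1)) / (1 - F ((y - s2) / l2)).
Proof.
  intros hl hs.
  assert (case1 : forall x y, x <= y -> y <= s1 ->
    (1 - F ((x - s1) / l1)) / (1 - F ((x - s2) / l2)) <=
    (1 - F ((y - s1) / l1)) / (1 - F ((y - s2) / l2))).
  { intros x y hxy hy.
    rewrite (F_zero ((x - s1) / l1)), (F_zero ((y - s1) / l1)).
    2,3: unfold Rdiv; assert (0 < / l1) by (apply Rinv_0_lt_compat; lra); nra.
    pose proof (F_lt1 ((x - s2) / l2)). pose proof (F_lt1 ((y - s2) / l2)).
    assert (F ((x - s2) / l2) <= F ((y - s2) / l2)).
    { apply F_mono. unfold Rdiv. apply Rmult_le_compat_r; [left; apply Rinv_0_lt_compat|]; lra. }
    apply Rmult_le_compat_l; [lra|]. apply Rinv_le_contravar; lra. }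
  intros x y hxy.
  destruct (Rle_lt_dec y s1) as [hy|hy]; [now apply case1|].
  set (t := fun z => (1 - F ((z - s1) / l1)) / (1 - F ((z - s2) / l2))).
  change (t x <= t y).
  apply Rle_trans with (t (Rmax x s1)).
  { unfold Rmax. destruct (Rle_dec x s1); [apply case1; lra| lra]. }
  apply (mono_deriv t (fun z =>
     ((- (f ((z - s1) / l1) / l1)) * (1 - F ((z - s2) / l2))
      - (1 - F ((z - s1) / l1)) * (- (f ((z - s2) / l2) / l2))) / (1 - F ((z - s2) / l2)) ^ 2)).
  - apply Rmax_lub; lra.
  - intros z hz. assert (s1 < z) by (pose proof (Rmax_r x s1); lra).
    apply is_derive_Reals. unfold t.
    apply (is_derive_div (fun z => 1 - F ((z - s1) / l1)) (fun z => 1 - F ((z - s2) / l2))).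
    + apply is_derive_Reals. apply dS; lra.
    + apply is_derive_Reals. apply dS; lra.
    + pose proof (F_lt1 ((z - s2) / l2)). lra.
  - intros z hz. unfold t.
    apply (continuity_pt_div (fun z => 1 - F ((z - s1) / l1)) (fun z => 1 - F ((z - s2) / l2))).
    + apply cS; lra.
    + apply cS; lra.
    + pose proof (F_lt1 ((z - s2) / l2)). lra.
  - intros z hz. assert (s1 < z) by (pose proof (Rmax_r x s1); lra).
    set (u1 := (z - s1) / l1). set (u2 := (z - s2) / l2).
    assert (hu1 : 0 < u1) by (unfold u1; apply Rdiv_lt_0_compat; lra).
    assert (hu12 : u1 <= u2).
    { unfold u1, u2. apply (Rmult_le_reg_r (l1 * l2)); [nra|].
      field_simplify; try lra. nra. }
    pose proof (hI u1 u2 hu1 hu12) as hh. unfold hazard in hh.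
    pose proof (F_lt1 u1) as p1. pose proof (F_lt1 u2) as p2.
    pose proof HF as (_&_&_&_&_&hd).
    destruct (hd u1 hu1) as [hf1 _].
    set (S1 := 1 - F u1) in *. set (S2 := 1 - F u2) in *.
    set (h1 := f u1 / S1) in *. set (h2 := f u2 / S2) in *.
    assert (e1 : f u1 = h1 * S1) by (unfold h1; field; lra).
    assert (e2 : f u2 = h2 * S2) by (unfold h2; field; lra).
    assert (hh1 : 0 <= h1) by (unfold h1; apply Rdiv_le_0_compat; lra).
    rewrite e1, e2. apply Rdiv_le_0_compat; [|apply pow_lt; lra].
    assert (h1 / l1 <= h2 / l2).
    { apply Rle_trans with (h1 / l2).
      - unfold Rdiv. apply Rmult_le_compat_l; [lra|]. apply Rinv_le_contravar; lra.
      - unfold Rdiv. apply Rmult_le_compat_r; [left; apply Rinv_0_lt_compat|]; lra. }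
    replace (- (h1 * S1 / l1) * S2 - S1 * - (h2 * S2 / l2)) with
      (S1 * S2 * (h2 / l2 - h1 / l1)) by (field; lra).
    apply Rmult_le_pos; [nra|lra].
Qed.
End S.

Lemma ind_eq F f (HF : lifetime_cdf F f) s l x : 0 < l ->
  F ((x - s) / l) * ind_gt s x = F ((x - s) / l).
Proof.
  intros hl. unfold ind_gt. destruct (Rlt_dec s x); [ring|].
  rewrite (F_zero F f HF); [ring|].
  unfold Rdiv; assert (0 < / l) by (apply Rinv_0_lt_compat; lra); nra.
Qed.

Theorem theorem4p3 (F f : R -> R) (s1 s2 l1 l2 r1 r2 : R)
  (n1 n2 m1 m2 : nat) :
  lifetime_cdf F f ->
  0 <= s1 -> 0 <= s2 -> 0 < l1 -> 0 < l2 -> 0 <= r1 -> 0 <= r2 ->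
  (0 < n1)%nat -> (0 < n2)%nat -> (0 < m1)%nat -> (0 < m2)%nat ->
  INR n1 * r1 + INR n2 * r2 = 1 ->
  INR m1 * r1 + INR m2 * r2 = 1 ->
  ((IFR F f /\ 0 < l2 <= l1 /\ 0 < s2 <= s1) \/
   (DPFR F f /\ 0 < l1 <= l2 /\ 0 < s1 <= s2)) ->
  (n1 * m2 >= m1 * n2)%nat ->
  hr_ge (mix_cdf F (INR n1 * r1) (INR n2 * r2) s1 s2 l1 l2)
        (mix_cdf F (INR m1 * r1) (INR m2 * r2) s1 s2 l1 l2).
Proof.
  intros HF hs1 hs2 hl1 hl2 hr1 hr2 hn1 hn2 hm1 hm2 ha hb hcase hnm.
  destruct hcase as [[hI [hl hs]] | [hD _]]; [| exfalso; exact (DPFR_false F f HF hD)].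
  assert (hD : INR m1 * INR n2 <= INR n1 * INR m2).
  { rewrite <- !mult_INR. apply le_INR. lia. }
  pose proof (lt_0_INR _ (proj1 (Nat.ltb_lt 0 n1) (proj2 (Nat.ltb_lt 0 n1) hn1))) as _.
  assert (0 <= INR n1) by apply pos_INR. assert (0 <= INR n2) by apply pos_INR.
  assert (0 <= INR m1) by apply pos_INR. assert (0 <= INR m2) by apply pos_INR.
  set (a1 := INR n1 * r1) in *. set (a2 := INR n2 * r2) in *.
  set (b1 := INR m1 * r1) in *. set (b2 := INR m2 * r2) in *.
  assert (hab : 0 <= a1 * b2 - a2 * b1).
  { unfold a1, a2, b1, b2. 
    replace (INR n1 * r1 * (INR m2 * r2) - INR n2 * r2 * (INR m1 * r1)) with
      (r1 * r2 * (INR n1 * INR m2 - INR m1 * INR n2)) by ring.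
    apply Rmult_le_pos; [nra|lra]. }
  assert (0 <= a1) by (unfold a1; nra). assert (0 <= a2) by (unfold a2; nra).
  assert (0 <= b1) by (unfold b1; nra). assert (0 <= b2) by (unfold b2; nra).
  unfold hr_ge, mix_cdf. intros x y hxy.
  rewrite !Rmult_assoc, !(ind_eq F f HF) by lra.
  pose proof (t_mono F f HF hI s1 s2 l1 l2 hl hs x y hxy) as ht.
  pose proof (F_lt1 F f HF ((x - s1) / l1)).
  pose proof (F_lt1 F f HF ((x - s2) / l2)).
  pose proof (F_lt1 F f HF ((y - s1) / l1)).
  pose proof (F_lt1 F f HF ((y - s2) / l2)).
  set (u := 1 - F ((x - s1) / l1)) in *. set (v := 1 - F ((x - s2) / l2)) in *.
  set (u' := 1 - F ((y - s1) / l1)) in *. set (v' := 1 - F ((y - s2) / l2)) in *.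
  replace (1 - (a1 * F ((x - s1) / l1) + a2 * F ((x - s2) / l2))) with (a1 * u + a2 * v)
    by (unfold u, v; nra).
  replace (1 - (b1 * F ((x - s1) / l1) + b2 * F ((x - s2) / l2))) with (b1 * u + b2 * v)
    by (unfold u, v; nra).
  replace (1 - (a1 * F ((y - s1) / l1) + a2 * F ((y - s2) / l2))) with (a1 * u' + a2 * v')
    by (unfold u', v'; nra).
  replace (1 - (b1 * F ((y - s1) / l1) + b2 * F ((y - s2) / l2))) with (b1 * u' + b2 * v')
    by (unfold u', v'; nra).
  clearbody u v u' v'.
  assert (huv : u * v' <= u' * v).
  { assert (e : u' / v' - u / v = (u' * v - u * v') / (v * v')) by (field; lra).
    assert (0 <= (u' * v - u * v') / (v * v')) by lra.
    assert (0 < v * v') by nra.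
    assert (0 <= u' * v - u * v'); [|lra].
    replace (u' * v - u * v') with ((u' * v - u * v') / (v * v') * (v * v')) by (field; lra).
    nra. }
  assert (hQ : 0 < b1 * u + b2 * v).
  { destruct (Rle_lt_dec b1 0); [assert (b1 = 0) by lra; subst; nra | nra]. }
  assert (hQ' : 0 < b1 * u' + b2 * v').
  { destruct (Rle_lt_dec b1 0); [assert (b1 = 0) by lra; nra | nra]. }
  assert (e : (a1 * u' + a2 * v') / (b1 * u' + b2 * v') - (a1 * u + a2 * v) / (b1 * u + b2 * v)
     = ((a1 * b2 - a2 * b1) * (u' * v - u * v')) / ((b1 * u + b2 * v) * (b1 * u' + b2 * v')))
    by (field; lra).
  assert (0 <= ((a1 * b2 - a2 * b1) * (u' * v - u * v')) / ((b1 * u + b2 * v) * (b1 * u' + b2 * v'))).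
  { apply Rdiv_le_0_compat; [apply Rmult_le_pos; lra | nra]. }
  lra.
Qed.
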